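(* For $n,k,f\geqslant 0$ let $\mathfrak{j}_{n,k,f}$ be the number of words $\omega$ of length $n$ over the alphabet $\{0,\dots,k-1\}$ avoiding both $010$ and $110$ with $\mathrm{forb}(\omega,\{010,110\})=f$ (the empty word has $\mathrm{forb}=0$), and let $\mathfrak{k}_{n,k}=\sum_{f}\mathfrak{j}_{n,k,f}$ be the number of words of length $n$ over $\{0,\dots,k-1\}$ avoiding $010$ and $110$. Then for all $n\geqslant1$ and $k,f\geqslant0$, $$\mathfrak{j}_{n,k,f}=\sum_{p=1}^{n}\sum_{i=0}^{f-1}\sum_{m=0}^{k-1}\mathfrak{j}_{p-1,m,i}\cdot\Bigl(\mathfrak{j}_{n-p,\,m-i,\,f-i-1}+\delta_{f,m+1}\sum_{\ell=0}^{n-p-1}\mathfrak{k}_{\ell,\,m-i}\Bigr).$$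
   Context: $\delta_{a,b}$ is the Kronecker delta. A word contains a pattern $p$ if some subsequence is order-isomorphic to $p$; otherwise it avoids $p$. Avoiding $010$: no $i<j<l$ with $\omega_i=\omega_l<\omega_j$. Avoiding $110$: no $i<j<l$ with $\omega_i=\omega_j>\omega_l$. For a nonempty sequence $\omega$ avoiding a set of patterns $P$, a value $v\in\{0,\dots,\max(\omega)\}$ is forbidden if $\omega$ followed by $M$ and then $v$ contains some pattern of $P$, where $M>\max(\omega)$; $\mathrm{forb}(\omega,P)$ is the number of forbidden values. *)

(* Defs.v *)
From mathcomp Require Import all_boot.
Set Implicit Arguments. Unset Strict Implicit. Unset Printing Implicit Defensive.

(* [s] is order-isomorphic to [p]: same length and same relative order of
   every pair of positions (comparing with < in both directions also
   determines equality). *)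
Definition order_iso (s p : seq nat) : bool :=
  (size s == size p) &&
  [forall i : 'I_(size s), forall j : 'I_(size s),
     (nth 0 s i < nth 0 s j) == (nth 0 p i < nth 0 p j)].

Definition contains (w p : seq nat) : bool :=
  [exists m : (size w).-tuple bool, order_iso (mask m w) p].

Definition avoids (P : seq (seq nat)) (w : seq nat) : bool :=
  all (fun p => ~~ contains w p) P.

Definition maxw (w : seq nat) : nat := \max_(x <- w) x.

Definition forb (w : seq nat) (P : seq (seq nat)) : nat :=
  if w is [::] then 0 else
  count (fun v => ~~ avoids P (w ++ [:: (maxw w).+1; v])) (iota 0 (maxw w).+1).

Definition pat010 : seq nat := [:: 0; 1; 0].
Definition pat110 : seq nat := [:: 1; 1; 0].
Definition P010_110 : seq (seq nat) := [:: pat010; pat110].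

Definition jj (n k f : nat) : nat :=
  #|[set w : n.-tuple 'I_k |
       avoids P010_110 (map val w) && (forb (map val w) P010_110 == f)]|.

Definition kk (n k : nat) : nat :=
  #|[set w : n.-tuple 'I_k | avoids P010_110 (map val w)]|.

Definition delta (a b : nat) : nat := (a == b).

(* Main.v *)
Require Import Defs.
From mathcomp Require Import all_boot zify.
Set Implicit Arguments. Unset Strict Implicit. Unset Printing Implicit Defensive.

Lemma subseq_map_inj (f : nat -> nat) : injective f ->
  forall s1 s2, subseq (map f s1) (map f s2) = subseq s1 s2.
Proof.
move=> fi s1 s2; apply/idP/idP; last exact: map_subseq.
case/subseqP => m sz E; rewrite -map_mask in E.
apply/subseqP; exists m; first by rewrite sz size_map.
exact: inj_map fi _ _ E.
Qed.

Lemma subseq_catP (s x y : seq nat) :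
  reflect (exists s1 s2, [/\ s = s1 ++ s2, subseq s1 x & subseq s2 y])
          (subseq s (x ++ y)).
Proof.
apply: (iffP idP).
- case/subseqP => m sz ->.
  exists (mask (take (size x) m) x), (mask (drop (size x) m) y).
  rewrite -mask_cat ?cat_take_drop ?mask_subseq //.
  by rewrite size_takel // sz size_cat leq_addr.
- by case=> s1 [s2 [-> h1 h2]]; exact: cat_subseq.
Qed.

Lemma containsP w p :
  reflect (exists2 s, subseq s w & order_iso s p) (contains w p).
Proof.
apply: (iffP existsP).
- by case=> m h; exists (mask m w) => //; exact: mask_subseq.
- case=> s /subseqP [m sz ->] h.
  have sz' : size m == size w by apply/eqP.
  by exists (Tuple sz').
Qed.

Lemma iso010 s : order_iso s pat010 <-> exists a b, s = [:: a; b; a] /\ a < b.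
Proof.
split.
- case/andP => sz /forallP H.
  case: s sz H => [|a [|b [|c [|d s]]]] // _ H.
  have h01 := forallP (H (@Ordinal 3 0 isT)) (@Ordinal 3 1 isT).
  have h02 := forallP (H (@Ordinal 3 0 isT)) (@Ordinal 3 2 isT).
  have h20 := forallP (H (@Ordinal 3 2 isT)) (@Ordinal 3 0 isT).
  move: h01 h02 h20 => /= /eqP h01 /eqP h02 /eqP h20.
  exists a, b; split => //.
  by have -> : c = a by lia.
- case=> a [b [-> ab]]; apply/andP; split => //.
  apply/forallP => i; apply/forallP => j.
  case: i j => [[|[|[|i]]] Hi] [[|[|[|j]]] Hj] //=; apply/eqP; lia.
Qed.

Lemma iso110 s : order_iso s pat110 <-> exists a c, s = [:: a; a; c] /\ c < a.
Proof.
split.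
- case/andP => sz /forallP H.
  case: s sz H => [|a [|b [|c [|d s]]]] // _ H.
  have h01 := forallP (H (@Ordinal 3 0 isT)) (@Ordinal 3 1 isT).
  have h10 := forallP (H (@Ordinal 3 1 isT)) (@Ordinal 3 0 isT).
  have h20 := forallP (H (@Ordinal 3 2 isT)) (@Ordinal 3 0 isT).
  move: h01 h10 h20 => /= /eqP h01 /eqP h10 /eqP h20.
  exists a, c; split => //.
  by have -> : b = a by lia.
- case=> a [c [-> ab]]; apply/andP; split => //.
  apply/forallP => i; apply/forallP => j.
  case: i j => [[|[|[|i]]] Hi] [[|[|[|j]]] Hj] //=; apply/eqP; lia.
Qed.

Definition AV (w : seq nat) :=
  (forall a b, a < b -> ~~ subseq [:: a; b; a] w) /\
  (forall a c, c < a -> ~~ subseq [:: a; a; c] w).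

Lemma avP w : avoids P010_110 w <-> AV w.
Proof.
rewrite /avoids /= andbT; split.
- case/andP => /containsP h1 /containsP h2; split.
  + move=> a b ab; apply/negP => hs; apply: h1; exists [:: a; b; a] => //.
    by apply/iso010; exists a, b.
  + move=> a c ca; apply/negP => hs; apply: h2; exists [:: a; a; c] => //.
    by apply/iso110; exists a, c.
- case=> h1 h2; apply/andP; split; apply/containsP => -[s hs].
  + by case/iso010 => a [b [E ab]]; subst s; move/negP: (h1 a b ab).
  + by case/iso110 => a [c [E ab]]; subst s; move/negP: (h2 a c ab).
Qed.

Lemma split3 (a b c : nat) x y : subseq [:: a; b; c] (x ++ y) ->
  [\/ subseq [:: a; b; c] x, subseq [:: a; b] x /\ c \in y,
      a \in x /\ subseq [:: b; c] y | subseq [:: a; b; c] y].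
Proof.
case/subseq_catP => s1 [s2 [E h1 h2]].
case: s1 E h1 h2 => [|a1 [|b1 [|c1 [|d1 s1]]]] //=.
- by move=> <- _ h; apply: Or44.
- by case=> E1 E2 h1 h2; subst; apply: Or43; rewrite -sub1seq.
- by case=> E1 E2 E3 h1 h2; subst; apply: Or42; rewrite -sub1seq.
- by case=> E1 E2 E3 E; subst => h _; apply: Or41.
Qed.

Lemma split2 (a b : nat) x y : subseq [:: a; b] (x ++ y) ->
  [\/ subseq [:: a; b] x, a \in x /\ b \in y | subseq [:: a; b] y].
Proof.
case/subseq_catP => s1 [s2 [E h1 h2]].
case: s1 E h1 h2 => [|a1 [|b1 [|c1 s1]]] //=.
- by move=> <- _ h; apply: Or33.
- by case=> E1 E2 h1 h2; subst; apply: Or32; rewrite -!sub1seq.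
- by case=> E1 E2 E; subst => h _; apply: Or31.
Qed.

Lemma subseq_consE (s : seq nat) m z : subseq s (m :: z) ->
  subseq s z \/ exists s', s = m :: s' /\ subseq s' z.
Proof.
case: s => [|a s] /=; first by left; rewrite sub0seq.
case: eqP => [-> h|_ h]; [right; by exists s | by left].
Qed.

Definition Fs (w : seq nat) (v : nat) : bool :=
  (v \in w) || has (fun a => (v < a) && subseq [:: a; a] w) w.

Lemma sub_pre (s x y : seq nat) : subseq s x -> subseq s (x ++ y).
Proof. by move=> h; apply: subseq_trans h (prefix_subseq _ _). Qed.
Lemma sub_suf (s x y : seq nat) : subseq s y -> subseq s (x ++ y).
Proof. by move=> h; apply: subseq_trans h (suffix_subseq _ _). Qed.

Lemma av_pre x y : AV (x ++ y) -> AV x.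
Proof.
case=> h1 h2; split=> a b ab; apply/negP => /(sub_pre y) h.
  by move/negP: (h1 _ _ ab). by move/negP: (h2 _ _ ab).
Qed.
Lemma av_suf x y : AV (x ++ y) -> AV y.
Proof.
case=> h1 h2; split=> a b ab; apply/negP => /(sub_suf x) h.
  by move/negP: (h1 _ _ ab). by move/negP: (h2 _ _ ab).
Qed.

Lemma av_cat1 m x z : all (fun v => v < m) x -> all (fun v => v < m) z ->
  AV (x ++ m :: z) <-> [/\ AV x, AV z & all (fun v => ~~ Fs x v) z].
Proof.
move=> /allP hx /allP hz; split.
- move=> h; split.
  + exact: av_pre h.
  + by apply: (@av_suf [:: m]); apply: (av_suf h).
  + apply/allP => v vz; apply/negP; case/orP => [vx|/hasP [a ax /andP [va aa]]].
    * case: h => h1 _; move/negP: (h1 v m (hz v vz)); apply.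
      by apply: (@cat_subseq _ [:: v] [:: m; v]); rewrite ?sub1seq //= eqxx sub1seq.
    * case: h => _ h2; move/negP: (h2 a v va); apply.
      apply: (@cat_subseq _ [:: a; a] [:: v]) => //.
      by rewrite sub1seq in_cons vz orbT.
- case=> [[ax1 ax2] [az1 az2] /allP hf]; split.
  + move=> a b ab; apply/negP => /split3 [].
    * by apply/negP; apply: ax1.
    * case=> h1 h2; have ax : a \in x by rewrite -sub1seq; apply: subseq_trans h1; rewrite /= eqxx ?sub0seq.
      move: h2; rewrite in_cons => /orP [/eqP am|az].
        by have := hx a ax; rewrite am ltnn.
      by move: (hf a az); rewrite /Fs ax.
    * case=> ax h2; have : a \in m :: z by apply: (mem_subseq h2); rewrite !inE eqxx orbT.
      rewrite in_cons => /orP [/eqP am|az].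
        by have := hx a ax; rewrite am ltnn.
      by move: (hf a az); rewrite /Fs ax.
    * case/subseq_consE => [|[s' [E h]]]; first by apply/negP; apply: az1.
      case: E => am E; subst s'.
      have : a \in z by apply: (mem_subseq h); rewrite !inE eqxx orbT.
      by move/hz; rewrite am ltnn.
  + move=> a c ca; apply/negP => /split3 [].
    * by apply/negP; apply: ax2.
    * case=> h1 h2; have ax : a \in x by rewrite -sub1seq; apply: subseq_trans h1; rewrite /= eqxx ?sub0seq.
      move: h2; rewrite in_cons => /orP [/eqP cm|cz].
        by have := hx a ax; lia.
      by move: (hf c cz); rewrite /Fs negb_or => /andP [_ /hasPn H]; move: (H a ax); rewrite ca h1.
    * case=> ax h2; have : a \in m :: z by apply: (mem_subseq h2); rewrite !inE eqxx.
      rewrite in_cons => /orP [/eqP am|az].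
        by have := hx a ax; rewrite am ltnn.
      by move: (hf a az); rewrite /Fs ax.
    * case/subseq_consE => [|[s' [E h]]]; first by apply/negP; apply: az2.
      case: E => am E; subst s'.
      have : a \in z by apply: (mem_subseq h); rewrite !inE eqxx.
      by move/hz; rewrite am ltnn.
Qed.

Lemma in2 (a b : nat) s : subseq [:: a; b] s -> a \in s /\ b \in s.
Proof. by move/mem_subseq => h; split; apply: h; rewrite !inE eqxx ?orbT. Qed.
Lemma in3 (a b c : nat) s : subseq [:: a; b; c] s -> [/\ a \in s, b \in s & c \in s].
Proof. by move/mem_subseq => h; split; apply: h; rewrite !inE eqxx ?orbT. Qed.

Lemma av_tail m u z : all (fun v => v <= m) u -> m \in u ->
  all (fun v => v <= m) z ->
  AV (u ++ m :: z) <-> AV u /\ all (pred1 m) z.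
Proof.
move=> /allP hu mu /allP hz; split.
- move=> h; split; first exact: av_pre h.
  apply/allP => v vz /=; apply/negPn/negP => vm.
  have vlt : v < m by move/eqP: vm; have := hz v vz; lia.
  case: h => _ h2; move/negP: (h2 m v vlt); apply.
  apply: (@cat_subseq _ [:: m] [:: m; v]); first by rewrite sub1seq.
  by rewrite /= eqxx sub1seq.
- case=> [[h1 h2] /allP hz'].
  have hy : forall v, v \in m :: z -> v = m.
    by move=> v; rewrite in_cons => /orP [/eqP //| /hz' /eqP ->].
  split.
  + move=> a b ab; apply/negP => /split3 [].
    * by apply/negP; apply: h1.
    * case=> /in2 [_ bu] ay; have := hy _ ay; have := hu _ bu; lia.
    * case=> _ /in2 [by' ay]; have := hy _ ay; have := hy _ by'; lia.
    * case/in3 => ay by' _; have := hy _ ay; have := hy _ by'; lia.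
  + move=> a c ca; apply/negP => /split3 [].
    * by apply/negP; apply: h2.
    * case=> /in2 [au _] cy; have := hy _ cy; have := hu _ au; lia.
    * case=> au /in2 [_ cy]; have := hy _ cy; have := hu _ au; lia.
    * case/in3 => ay _ cy; have := hy _ ay; have := hy _ cy; lia.
Qed.

Lemma Fs_cat1 m x z v : all (fun v => v < m) x -> all (fun v => v < m) z ->
  AV (x ++ m :: z) -> Fs (x ++ m :: z) v = [|| Fs x v, v == m | Fs z v].
Proof.
move=> hx' hz' h; have [_ _ /allP hf] := (av_cat1 hx' hz').1 h.
move/allP: hx' => hx; move/allP: hz' => hz.
rewrite /Fs mem_cat in_cons; apply/idP/idP.
- case/orP => [/orP [vx|/orP [vm|vz]]|]; first by rewrite vx.
  + by rewrite vm !orbT.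
  + by rewrite vz !orbT.
  + case/hasP => a _ /andP [va /split2 []].
    * move=> aa; have [ax _] := in2 aa.
      by apply/orP; left; apply/orP; right; apply/hasP; exists a => //; rewrite va aa.
    * case=> ax; rewrite in_cons => /orP [/eqP am|az].
        by have := hx a ax; rewrite am ltnn.
      by move: (hf a az); rewrite /Fs ax.
    * case/subseq_consE => [aa|[s' [[am E1] E]]].
        have [az _] := in2 aa.
        by rewrite !orbA; apply/orP; right; apply/hasP; exists a => //; rewrite va aa.
      subst s'; move: E; rewrite sub1seq => /hz; by rewrite am ltnn.
- case/orP => [/orP [vx|/hasP [a ax /andP [va aa]]]|/orP [vm|/orP [vz|/hasP [a az /andP [va aa]]]]].
  + by rewrite vx.
  + apply/orP; right; apply/hasP; exists a; first by rewrite mem_cat ax.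
    by rewrite va sub_pre.
  + by rewrite vm !orbT.
  + by rewrite vz !orbT.
  + apply/orP; right; apply/hasP; exists a; first by rewrite mem_cat in_cons az !orbT.
    by rewrite va; apply: sub_suf; apply: subseq_trans aa (subseq_cons _ _).
Qed.

Lemma maxw_ge w v : v \in w -> v <= maxw w.
Proof.
rewrite /maxw; elim: w => [//|a w IH]; rewrite in_cons big_cons.
case/orP => [/eqP ->|/IH h]; first exact: leq_maxl.
exact: leq_trans h (leq_maxr _ _).
Qed.

Lemma maxw_lt w N : all (fun v => v < N) w -> 0 < N -> maxw w < N.
Proof.
rewrite /maxw; elim: w => [|a w IH] /=; first by rewrite big_nil.
by case/andP => aN /IH h N0; rewrite big_cons gtn_max aN h.
Qed.

Lemma Fs_big w N v : all (fun v => v < N) w -> N <= v -> Fs w v = false.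
Proof.
move/allP => hw Nv; apply/negP; case/orP => [/hw|/hasP [a /hw aN /andP [va _]]]; lia.
Qed.

Lemma av_ext w v : AV w -> v <= maxw w ->
  avoids P010_110 (w ++ [:: (maxw w).+1; v]) = ~~ Fs w v.
Proof.
move=> [h1 h2] vM; set M := (maxw w).+1.
have hw : forall a, a \in w -> a < M by move=> a /maxw_ge.
apply/idP/idP.
- move/avP => [g1 g2]; apply/negP; case/orP => [vx|/hasP [a ax /andP [va aa]]].
  + move/negP: (g1 v M vM); apply.
    by apply: (@cat_subseq _ [:: v] [:: M; v]); rewrite ?sub1seq ?subseq_refl.
  + move/negP: (g2 a v va); apply.
    by apply: (@cat_subseq _ [:: a; a] [:: v]); rewrite // sub1seq !inE eqxx orbT.
- move=> hF; apply/avP; move: hF; rewrite /Fs negb_or => /andP [vw /hasPn hn]; split.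
  + move=> a b ab; apply/negP => /split3 [].
    * by apply/negP; apply: h1.
    * case=> /in2 [aw _]; rewrite !inE => /orP [/eqP aM|/eqP av].
        by have := hw _ aw; rewrite aM ltnn.
      by move: vw; rewrite -av aw.
    * case=> aw /in2 [_]; rewrite !inE => /orP [/eqP aM|/eqP av].
        by have := hw _ aw; rewrite aM ltnn.
      by move: vw; rewrite -av aw.
    * by move/size_subseq.
  + move=> a c ca; apply/negP => /split3 [].
    * by apply/negP; apply: h2.
    * case=> aa; have [aw _] := in2 aa; rewrite !inE => /orP [/eqP cM|/eqP cv].
        by have := hw _ aw; lia.
      by move: (hn a aw); rewrite -cv ca aa.
    * case=> aw /in2 [+ _]; rewrite !inE => /orP [/eqP aM|/eqP av].
        by have := hw _ aw; rewrite aM ltnn.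
      by move: vw; rewrite -av aw.
    * by move/size_subseq.
Qed.

Lemma forbE w N : AV w -> all (fun v => v < N) w ->
  forb w P010_110 = count (Fs w) (iota 0 N).
Proof.
case: w => [|a w'] hav hN.
  by rewrite /= (@eq_count _ _ pred0) ?count_pred0.
set w := a :: w' in hav hN *.
have N0 : 0 < N by move: (hN) => /= /andP [aN _]; lia.
have mN := maxw_lt hN N0.
have -> : forb w P010_110 = count (fun v => ~~ avoids P010_110 (w ++ [:: (maxw w).+1; v])) (iota 0 (maxw w).+1) by [].
have -> : count (Fs w) (iota 0 N) = count (Fs w) (iota 0 (maxw w).+1).
  have -> : N = (maxw w).+1 + (N - (maxw w).+1) by lia.
  rewrite iotaD count_cat.
  rewrite [X in _ + X](@eq_in_count _ _ pred0); last first.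
    move=> v; rewrite mem_iota => /andP [hv _]; apply: (@Fs_big w (maxw w).+1) => //.
    by apply/allP => u /maxw_ge.
  by rewrite count_pred0 addn0.
apply: eq_in_count => v; rewrite mem_iota => /andP [_ hv].
by rewrite (av_ext hav) ?negbK //; lia.
Qed.

Lemma Fs_full m w v : subseq [:: m; m] w -> v <= m -> Fs w v.
Proof.
move=> h; rewrite leq_eqVlt => /orP [/eqP ->|vm]; have [mw _] := in2 h.
  by rewrite /Fs mw.
by rewrite /Fs; apply/orP; right; apply/hasP; exists m => //; rewrite vm h.
Qed.

Section Relabel.
Variable g : nat -> nat.
Hypothesis gm : forall x y, (g x < g y) = (x < y).

Lemma g_inj : injective g.
Proof. move=> x y E; have := gm x y; have := gm y x; rewrite E ltnn; lia. Qed.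

Lemma AV_map w : AV (map g w) <-> AV w.
Proof.
split.
- case=> h1 h2; split.
  + move=> a b ab; apply/negP => /(map_subseq g) h.
    by have := h1 (g a) (g b); rewrite gm => /(_ ab) /negP; apply.
  + move=> a c ca; apply/negP => /(map_subseq g) h.
    by have := h2 (g a) (g c); rewrite gm => /(_ ca) /negP; apply.
- case=> h1 h2; split.
  + move=> a b ab; apply/negP => h; have [/mapP [a' _ ea] /mapP [b' _ eb] _] := in3 h.
    subst a b; move: h; rewrite (_ : [:: g a'; g b'; g a'] = map g [:: a'; b'; a']) //.
    rewrite subseq_map_inj; last exact: g_inj.
    by apply/negP; apply: h1; rewrite -gm.
  + move=> a c ca; apply/negP => h; have [/mapP [a' _ ea] _ /mapP [c' _ ec]] := in3 h.
    subst a c; move: h; rewrite (_ : [:: g a'; g a'; g c'] = map g [:: a'; a'; c']) //.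
    rewrite subseq_map_inj; last exact: g_inj.
    by apply/negP; apply: h2; rewrite -gm.
Qed.

Lemma Fs_map w v : Fs (map g w) (g v) = Fs w v.
Proof.
rewrite /Fs (mem_map g_inj) has_map; congr orb; apply: eq_has => a /=.
rewrite gm (_ : [:: g a; g a] = map g [:: a; a]) // subseq_map_inj //.
exact: g_inj.
Qed.
End Relabel.

Fixpoint Ws (s : seq nat) (n : nat) : seq (seq nat) :=
  if n is n'.+1 then [seq y :: z | y <- s, z <- Ws s n'] else [:: [::]].
Definition W k n := Ws (iota 0 k) n.

Lemma Ws_sum s n (F : seq nat -> nat) :
  \sum_(w <- Ws s n.+1) F w = \sum_(y <- s) \sum_(z <- Ws s n) F (y :: z).
Proof. by rewrite /= big_allpairs_dep. Qed.

Lemma sum_tuple k n (P : pred (seq nat)) :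
  \sum_(t : n.-tuple 'I_k) P (map val t) = \sum_(w <- W k n) P w.
Proof.
elim: n P => [|n IH] P.
  rewrite (big_pred1 [tuple]) /W /= ?big_seq1 // => t.
  by symmetry; apply/eqP; exact: tuple0.
pose h (p : 'I_k * n.-tuple 'I_k) : n.+1.-tuple 'I_k := [tuple of p.1 :: p.2].
rewrite (reindex h); last first.
  exists (fun t : n.+1.-tuple 'I_k => (thead t, [tuple of behead t])).
    by case=> x t _; congr pair; apply: val_inj.
  by move=> t _; rewrite /h /= -tuple_eta.
transitivity (\sum_(x : 'I_k) \sum_(t : n.-tuple 'I_k) P (val x :: map val t)).
  by rewrite pair_bigA; apply: eq_bigr => -[x t] _.
transitivity (\sum_(x : 'I_k) \sum_(w <- W k n) P (val x :: w)).
  by apply: eq_bigr => x _; exact: (IH (fun w => P (val x :: w))).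
rewrite /W Ws_sum -{2}val_enum_ord big_map big_enum /=.
by [].
Qed.

Lemma card_sumW k n (P : pred (seq nat)) :
  #|[set t : n.-tuple 'I_k | P (map val t)]| = \sum_(w <- W k n) P w.
Proof.
rewrite -sum_tuple -sum1_card big_mkcond /=; apply: eq_bigr => t _.
by rewrite inE; case: (P _).
Qed.

Lemma Ws_restrict s n (P : pred nat) (F : seq nat -> nat) :
  \sum_(z <- Ws s n | all P z) F z = \sum_(z <- Ws (filter P s) n) F z.
Proof.
elim: n F => [|n IH] F; first by rewrite /= !big_cons !big_nil.
rewrite big_mkcond Ws_sum Ws_sum big_filter [RHS]big_mkcond; apply: eq_bigr => y _.
case Py: (P y); last by rewrite big1 // => z _; rewrite /= Py.
by rewrite -IH [RHS]big_mkcond; apply: eq_bigr => z _; rewrite /= Py.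
Qed.

Lemma Ws_first s L (P : pred nat) (F : seq nat -> nat) :
  \sum_(z <- Ws s L | ~~ all P z) F z =
  \sum_(q < L) \sum_(x <- Ws s q | all P x) \sum_(y <- s | ~~ P y)
     \sum_(z <- Ws s (L - q.+1)) F (x ++ y :: z).
Proof.
elim: L F => [|L IH] F; first by rewrite big_ord0 /= big_cons big_nil.
rewrite big_mkcond Ws_sum big_ord_recl big_cons big_nil /= addn0 subn1 /=.
transitivity (\sum_(y <- s | ~~ P y) \sum_(z <- Ws s L) F (y :: z) +
  \sum_(y <- s | P y) \sum_(z <- Ws s L | ~~ all P z) F (y :: z)).
  rewrite [in RHS]big_mkcond [X in _ + X]big_mkcond -big_split /=.
  apply: eq_bigr => y _; case Py: (P y) => /=; last first.
    by rewrite addn0; apply: eq_bigr => z _.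
  by rewrite add0n [RHS]big_mkcond.
congr (_ + _).
under eq_bigr => y Py do rewrite IH.
rewrite exchange_big; apply: eq_bigr => q _ /=.
rewrite /bump leq0n add0n add1n subSS.
rewrite [RHS]big_mkcond big_allpairs_dep [LHS]big_mkcond /=; apply: eq_bigr => y _.
case Py: (P y) => /=; last by rewrite big1 // => x _; rewrite Py.
rewrite big_mkcond /= => //.
Qed.

Lemma Ws1 m r : Ws [:: m] r = [:: nseq r m].
Proof. by elim: r => [|r IH] //=; rewrite IH. Qed.

Lemma Ws_map (g : nat -> nat) s n : Ws (map g s) n = map (map g) (Ws s n).
Proof.
elim: n => [|n IH] //=.
by rewrite allpairs_mapl IH allpairs_mapr map_allpairs.
Qed.

Lemma mem_Ws s n w : w \in Ws s n -> size w = n /\ all (fun v => v \in s) w.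
Proof.
elim: n w => [|n IH] w /=; first by rewrite inE => /eqP ->.
case/allpairsPdep => y [z [ys zs ->]]; have [<- h] := IH _ zs.
by rewrite /= ys h.
Qed.

Lemma tele (A : nat -> bool) k : (forall j, A j -> A j.+1) ->
  \sum_(m < k) (A m.+1 && ~~ A m) = A k - A 0.
Proof.
move=> mono; elim: k => [|k IH]; first by rewrite big_ord0 subnn.
rewrite big_ord_recr /= IH.
have h0k : A 0 -> A k by elim: k {IH} => // k IH /IH /mono.
have := mono k; move: h0k; case: (A 0); case: (A k); case: (A k.+1) => //= h1 h2;
  try (by have := h1 isT); try (by have := h2 isT).
Qed.

Lemma filter_iota m k : m <= k -> filter (fun v => v < m) (iota 0 k) = iota 0 m.
Proof.
move=> mk; rewrite -(subnKC mk) iotaD filter_cat add0n.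
rewrite (@eq_in_filter _ _ predT); last by move=> v; rewrite mem_iota.
rewrite (@eq_in_filter _ _ pred0 (iota m _)); last first.
  by move=> v; rewrite mem_iota /=; lia.
by rewrite filter_predT filter_pred0 cats0.
Qed.

Lemma sum_last m (G : nat -> nat) :
  \sum_(y <- iota 0 m.+1 | ~~ (y < m)) G y = G m.
Proof.
rewrite -addn1 iotaD big_cat /= big_cons big_nil ltnn /= addn0 add0n.
by rewrite big_seq_cond big1 // => y /andP [/[!mem_iota] /andP [_ ym] /negP []].
Qed.

Lemma countU (a b : pred nat) s :
  count (fun v => a v || b v) s = count a s + count (fun v => ~~ a v && b v) s.
Proof. by elim: s => //= v s ->; case: (a v); case: (b v) => //=; lia. Qed.

Lemma sum_ind_eq (G : nat -> nat) j f :
  \sum_(0 <= i < f) (j == i) * G i = (j < f) * G j.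
Proof.
rewrite (eq_bigr (fun i => if i == j then G i else 0)); last first.
  by move=> i _; rewrite eq_sym; case: eqP => _; rewrite ?mul1n ?mul0n.
by rewrite -big_mkcond big_nat1_eq /=; case: (j < f); rewrite ?mul1n.
Qed.

Lemma decomp_max k n (H : seq nat -> nat) : 0 < n ->
  \sum_(w <- W k n) H w =
  \sum_(0 <= m < k) \sum_(0 <= q < n) \sum_(x <- W m q)
     \sum_(z <- W m.+1 (n - q.+1)) H (x ++ m :: z).
Proof.
move=> n0.
transitivity (\sum_(w <- W k n) \sum_(0 <= m < k)
   (all (fun v => v < m.+1) w && ~~ all (fun v => v < m) w) * H w).
  rewrite big_seq [RHS]big_seq; apply: eq_bigr => w /mem_Ws [sz /allP hw].
  rewrite -big_distrl /= big_mkord (@tele (fun j => all (fun v => v < j) w)); last first.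
    by move=> j /allP h; apply/allP => v /h; lia.
  have -> : all (fun v => v < k) w by apply/allP => v /hw; rewrite mem_iota.
  have -> : all (fun v => v < 0) w = false.
    by case: w sz {hw} => [|a w] /= sz; [subst n | ].
  by rewrite mul1n.
rewrite exchange_big; apply: eq_big_nat => m /andP [_ mk].
transitivity (\sum_(w <- W k n | all (fun v => v < m.+1) w) (~~ all (fun v => v < m) w) * H w).
  rewrite [RHS]big_mkcond; apply eq_bigr => w _; by case: (all _ w).
rewrite Ws_restrict filter_iota //.
transitivity (\sum_(w <- W m.+1 n | ~~ all (fun v => v < m) w) H w).
  by rewrite [RHS]big_mkcond; apply: eq_bigr => w _; case: (all _ w); rewrite ?mul1n.
rewrite Ws_first [RHS]big_mkord; apply eq_bigr => q _.
rewrite Ws_restrict filter_iota //; apply: eq_bigr => x _.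
exact: sum_last.
Qed.

Definition AVb w := avoids P010_110 w.
Definition fb w := forb w P010_110.
Definition JJ n k f := \sum_(w <- W k n) (AVb w && (fb w == f)).
Definition KK n k := \sum_(w <- W k n) AVb w.

Lemma homo_mono_ltn (g : nat -> nat) : (forall x y, x < y -> g x < g y) ->
  forall x y, (g x < g y) = (x < y).
Proof.
move=> hom x y; case: (ltngtP x y) => [h|h|->]; first by rewrite hom.
  by have := hom _ _ h; lia.
by rewrite ltnn.
Qed.

Section Relabel2.
Variables (A : seq nat) (m : nat).
Hypothesis hA : sorted ltn A.
Hypothesis hAm : all (fun v => v < m) A.

Definition gA j := if j < size A then nth 0 A j else m + j.

Lemma gA_mono x y : (gA x < gA y) = (x < y).
Proof.
apply: homo_mono_ltn => {}x {}y xy; rewrite /gA.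
have hn := sorted_ltn_nth ltn_trans 0 hA.
case: ifP => hx; case: ifP => hy.
- by apply: hn.
- have : nth 0 A x < m by apply: (allP hAm); rewrite mem_nth.
  lia.
- lia.
- lia.
Qed.

Lemma A_map : A = map gA (iota 0 (size A)).
Proof.
rewrite -{1}(mkseq_nth 0 A) /mkseq; apply/eq_in_map => j.
by rewrite mem_iota /gA => /andP [_ ->].
Qed.

Lemma sum_relabel L (Phi : seq nat -> nat) :
  \sum_(z <- Ws A L) Phi z = \sum_(z <- W (size A) L) Phi (map gA z).
Proof. by rewrite {1}A_map Ws_map big_map. Qed.

Lemma AVb_map z : AVb (map gA z) = AVb z.
Proof.
apply/idP/idP => /avP h; apply/avP.
  by apply/(AV_map gA_mono).
by apply/(AV_map gA_mono).
Qed.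

Lemma countFs_map z : all (fun v => v < size A) z -> AV z ->
  count (Fs (map gA z)) A = fb z.
Proof.
move=> hz Az; rewrite {1}A_map count_map /fb (forbE Az hz).
by apply: eq_count => v /=; rewrite Fs_map //; exact: gA_mono.
Qed.
End Relabel2.

Lemma forb_cat1 m x z : all (fun v => v < m) x -> all (fun v => v < m) z ->
  AV (x ++ m :: z) ->
  fb (x ++ m :: z) = fb x + count (Fs z) (filter (fun v => ~~ Fs x v) (iota 0 m)) + 1.
Proof.
move=> hx hz Aw.
have hw : all (fun v => v < m.+1) (x ++ m :: z).
  have sub : subpred (fun v => v < m) (fun v => v < m.+1) by move=> v /= h; lia.
  by rewrite all_cat /= ltnSn (sub_all sub hx) (sub_all sub hz).
rewrite /fb (forbE Aw hw) (forbE (av_pre Aw) hx).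
rewrite (@eq_count _ _ (fun v => [|| Fs x v, v == m | Fs z v])); last first.
  by move=> v; exact: Fs_cat1.
rewrite -addn1 iotaD count_cat add0n /= eqxx orbT /= addn0.
rewrite (@eq_in_count _ _ (fun v => Fs x v || Fs z v)); last first.
  move=> v; rewrite mem_iota => h; rewrite (_ : (v == m) = false) //; lia.
by rewrite countU count_filter; congr (_ + _ + _); apply: eq_count => v /=; rewrite andbC.
Qed.

Lemma filter_last m : filter (pred1 m) (iota 0 m.+1) = [:: m].
Proof.
rewrite -addn1 iotaD filter_cat add0n /= eqxx.
rewrite (@eq_in_filter _ _ pred0); last by move=> v; rewrite mem_iota /=; lia.
by rewrite filter_pred0.
Qed.

Lemma sum_all1 m r : \sum_(z <- W m.+1 r) all (pred1 m) z = 1.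
Proof.
transitivity (\sum_(z <- W m.+1 r | all (pred1 m) z) 1).
  by rewrite [RHS]big_mkcond; apply eq_bigr => z _; case: (all _ _).
by rewrite Ws_restrict filter_last Ws1 big_seq1.
Qed.

Section Inner.
Variables (m : nat) (x : seq nat).
Hypothesis hx : all (fun v => v < m) x.
Hypothesis AVx : AV x.

Let A := filter (fun v => ~~ Fs x v) (iota 0 m).
Let hA : sorted ltn A := sorted_filter ltn_trans _ (iota_ltn_sorted 0 m).
Let hAm : all (fun v => v < m) A.
Proof. by apply/allP => v; rewrite mem_filter mem_iota => /andP [_ /andP [_ h]]. Qed.
Let szA : size A = m - fb x.
Proof.
rewrite size_filter /fb (forbE AVx hx).
have := count_predC (Fs x) (iota 0 m); rewrite size_iota.
have -> : count (predC (Fs x)) (iota 0 m) = count (fun v => ~~ Fs x v) (iota 0 m) by [].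
lia.
Qed.

Lemma partA L f :
  \sum_(z <- W m L) (AVb (x ++ m :: z) && (fb (x ++ m :: z) == f)) =
  (fb x < f) * JJ L (m - fb x) (f - fb x - 1).
Proof.
transitivity (\sum_(z <- W m L | all (fun v => ~~ Fs x v) z)
                 (AVb z && (fb x + count (Fs z) A + 1 == f))).
  rewrite [RHS]big_mkcond big_seq [RHS]big_seq; apply eq_bigr => z /mem_Ws [_ hz0].
  have hz : all (fun v => v < m) z.
    by apply: sub_all hz0 => v; rewrite mem_iota /=.
  case Aw: (AVb (x ++ m :: z)).
  - have Aw' : AV (x ++ m :: z) by apply/avP.
    have [_ Az hf] := (av_cat1 hx hz).1 Aw'.
    have Azb : AVb z by apply/avP.
    by rewrite /= hf Azb (forb_cat1 hx hz Aw').
  - case hf: (all _ z) => //; case Az: (AVb z) => //=.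
    have : AV (x ++ m :: z) by apply/(av_cat1 hx hz); split => //; apply/avP.
    by move/avP; rewrite /AVb in Aw; rewrite Aw.
rewrite Ws_restrict (sum_relabel A m) -szA /JJ big_distrr.
rewrite big_seq [RHS]big_seq; apply eq_bigr => z /mem_Ws [_ hz0].
have hz : all (fun v => v < size A) z.
  by apply: sub_all hz0 => v; rewrite mem_iota /=.
rewrite (AVb_map hA hAm); case Az: (AVb z) => /=; last by rewrite muln0.
rewrite (countFs_map hA hAm hz); last by apply/avP.
have [h|h] := ltnP (fb x) f.
  by rewrite mul1n; case: eqP => E1; case: eqP => E2 //=; lia.
by rewrite mul0n; case: eqP => //=; lia.
Qed.

Lemma tailsum z1 r f : all (fun v => v < m) z1 ->
  \sum_(z2 <- W m.+1 r) (AVb (x ++ m :: z1 ++ m :: z2) && (fb (x ++ m :: z1 ++ m :: z2) == f))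
  = (all (fun v => ~~ Fs x v) z1 && AVb z1) * (f == m.+1).
Proof.
move=> hz1.
transitivity (\sum_(z2 <- W m.+1 r)
   ((all (fun v => ~~ Fs x v) z1 && AVb z1) * (f == m.+1)) * all (pred1 m) z2); last first.
  by rewrite -big_distrr /= sum_all1 muln1.
rewrite big_seq [RHS]big_seq; apply eq_bigr => z2 /mem_Ws [_ hz20].
have hz2 : all (fun v => v <= m) z2.
  by apply: sub_all hz20 => v; rewrite mem_iota /=.
rewrite -cat_cons catA.
set u := x ++ m :: z1.
have hu : all (fun v => v <= m) u.
  have sub : subpred (fun v => v < m) (fun v => v <= m) by move=> v /= h; lia.
  by rewrite all_cat /= leqnn (sub_all sub hx) (sub_all sub hz1).
have mu : m \in u by rewrite mem_cat in_cons eqxx orbT.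
case Aw: (AVb (u ++ m :: z2)).
- have Aw' : AV (u ++ m :: z2) by apply/avP.
  have [Au hz2m] := (av_tail hu mu hz2).1 Aw'.
  have [_ Az1 hf] := (av_cat1 hx hz1).1 Au.
  have Az1b : AVb z1 by apply/avP.
  have hw : all (fun v => v < m.+1) (u ++ m :: z2).
    have sub : subpred (fun v => v <= m) (fun v => v < m.+1) by move=> v /= h; lia.
    by rewrite all_cat /= ltnSn (sub_all sub hu) (sub_all sub hz2).
  have -> : fb (u ++ m :: z2) = m.+1.
    rewrite /fb (forbE Aw' hw) (@eq_in_count _ _ predT) ?count_predT ?size_iota //.
    move=> v; rewrite mem_iota /= => hv; apply: (@Fs_full m); last by lia.
    apply: (@cat_subseq _ [:: m] [:: m]); rewrite ?sub1seq //.
    by rewrite in_cons eqxx.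
  by rewrite hf Az1b hz2m /= mul1n muln1 eq_sym.
- case hf1: (all _ z1); case Az: (AVb z1); case hz2m: (all _ z2); rewrite /= ?muln0 ?mul0n //.
  have Au : AV u by apply/(av_cat1 hx hz1); split => //; apply/avP.
  have : AV (u ++ m :: z2) by apply/(av_tail hu mu hz2).
  by move/avP => H; rewrite /AVb H in Aw.
Qed.

Lemma partB L f :
  \sum_(z <- W m.+1 L | ~~ all (fun v => v < m) z)
     (AVb (x ++ m :: z) && (fb (x ++ m :: z) == f)) =
  delta f m.+1 * \sum_(0 <= l < L) KK l (m - fb x).
Proof.
rewrite Ws_first big_mkord.
transitivity (\sum_(l < L) delta f m.+1 * KK l (m - fb x)); last by rewrite big_distrr.
apply eq_bigr => l _.
rewrite Ws_restrict filter_iota //.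
transitivity (\sum_(z1 <- W m l) (all (fun v => ~~ Fs x v) z1 && AVb z1) * (f == m.+1)).
  rewrite big_seq [RHS]big_seq; apply eq_bigr => z1 /mem_Ws [_ hz10].
  have hz1 : all (fun v => v < m) z1.
    by apply: sub_all hz10 => v; rewrite mem_iota /=.
  by rewrite sum_last tailsum.
rewrite -big_distrl mulnC /delta; congr (_ * _).
transitivity (\sum_(z1 <- W m l | all (fun v => ~~ Fs x v) z1) AVb z1).
  by rewrite [RHS]big_mkcond; apply eq_bigr => z1 _; case: (all _ _).
rewrite Ws_restrict (sum_relabel A m) -szA /KK; apply eq_bigr => z _.
by rewrite (AVb_map hA hAm).
Qed.
End Inner.

Lemma inner m x L f : all (fun v => v < m) x ->
  \sum_(z <- W m.+1 L) (AVb (x ++ m :: z) && (fb (x ++ m :: z) == f)) =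
  (AVb x && (fb x < f)) * (JJ L (m - fb x) (f - fb x - 1)
     + delta f m.+1 * \sum_(0 <= l < L) KK l (m - fb x)).
Proof.
move=> hx; case Ax: (AVb x); last first.
  rewrite mul0n big1 // => z _.
  case Aw: (AVb (x ++ m :: z)) => //.
  have : AV x by apply: (@av_pre x (m :: z)); apply/avP.
  by move/avP; rewrite /AVb in Ax; rewrite Ax.
have AVx : AV x by apply/avP.
rewrite (bigID (fun z => all (fun v => v < m) z)) /= Ws_restrict filter_iota //.
rewrite (partA hx AVx) (partB hx AVx).
have im : fb x <= m.
  by rewrite /fb (forbE AVx hx); have := count_size (Fs x) (iota 0 m); rewrite size_iota.
have [h|h] := ltnP (fb x) f; first by rewrite !mul1n.
rewrite !mul0n /delta; case: eqP => [E|_]; last by rewrite mul0n.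
lia.
Qed.

Lemma group m q f (G : nat -> nat) :
  \sum_(x <- W m q) (AVb x && (fb x < f)) * G (fb x) =
  \sum_(0 <= i < f) JJ q m i * G i.
Proof.
transitivity (\sum_(x <- W m q) \sum_(0 <= i < f) (AVb x && (fb x == i)) * G i).
  apply eq_bigr => x _; case: (AVb x) => /=; last first.
    by rewrite mul0n big1 // => i _; rewrite mul0n.
  by rewrite sum_ind_eq.
rewrite exchange_big; apply eq_bigr => i _; rewrite /JJ big_distrl.
by apply eq_bigr.
Qed.

Lemma jjJJ n k f : jj n k f = JJ n k f.
Proof. exact (card_sumW k n (fun w => AVb w && (fb w == f))). Qed.
Lemma kkKK n k : kk n k = KK n k.
Proof. exact (card_sumW k n (fun w => AVb w)). Qed.

Unset Implicit Arguments.

Theorem mainTheorem12 (n k f : nat) (hn : 1 <= n) :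
  jj n k f =
  \sum_(1 <= p < n.+1) \sum_(0 <= i < f) \sum_(0 <= m < k)
     jj p.-1 m i *
       (jj (n - p) (m - i) (f - i - 1)
        + delta f m.+1 * \sum_(0 <= l < n - p) kk l (m - i)).
Proof.
rewrite jjJJ /JJ (decomp_max _ _ hn).
transitivity (\sum_(0 <= m < k) \sum_(0 <= q < n) \sum_(0 <= i < f)
   JJ q m i * (JJ (n - q.+1) (m - i) (f - i - 1)
     + delta f m.+1 * \sum_(0 <= l < n - q.+1) KK l (m - i))).
  apply eq_bigr => m _; apply eq_bigr => q _.
  rewrite -(group m q f (fun i => JJ (n - q.+1) (m - i) (f - i - 1)
     + delta f m.+1 * \sum_(0 <= l < n - q.+1) KK l (m - i))).
  rewrite big_seq [RHS]big_seq; apply eq_bigr => x /mem_Ws [_ hx0].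
  rewrite inner //; apply: sub_all hx0 => v; rewrite mem_iota /=; lia.
rewrite big_add1 /= exchange_big; apply eq_bigr => q _.
rewrite exchange_big; apply eq_bigr => i _; apply eq_bigr => m _.
rewrite !jjJJ; congr (_ * (_ + _ * _)); apply eq_bigr => l _.
by rewrite kkKK.
Qed.
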